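(* Let $P,Q,R_0,R_1$ be integers with $PQ\ne0$, $\Delta:=P^2-4Q\neq0$, $|R_0|+|R_1|>0$, $\gcd(P,Q)=\gcd(R_1,Q)=1$, such that $\alpha/\beta$ is not a root of unity, where $\alpha,\beta$ are the roots of $x^2-Px+Q$; let $U_n=(\alpha^n-\beta^n)/(\alpha-\beta)$. Let $n\ge k$ be positive integers. Then for every $j\in\{k,k+1,\dots,n\}$, \[\prod_{\substack{k\le i\le n\\ i\ne j}}\left(R_0Q\left(\frac{U_{j-1}}{U_j}-\frac{U_{i-1}}{U_i}\right)\right)=(-1)^{n-j}R_0^{\,n-k}Q^{f(j,k,n)}\frac{[j-k]_{\boldsymbol U}!\,[n-j]_{\boldsymbol U}!}{U_j^{\,n-k-1}\,(U_kU_{k+1}\cdots U_n)}.\] Furthermore, if $k\ge2$, then for every $j\in\{k,\dots,n\}$, \[\prod_{\substack{k\le i\le n\\ i\ne j}}\left(R_1\left(\frac{U_i}{U_{i-1}}-\frac{U_j}{U_{j-1}}\right)\right)=(-1)^{n-j}R_1^{\,n-k}Q^{f(j,k,n)-(n-k)}\frac{[j-k]_{\boldsymbol U}!\,[n-j]_{\boldsymbol U}!}{U_{j-1}^{\,n-k-1}\,(U_{k-1}U_k\cdots U_{n-1})}.\]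
   Context: $U_0=0,U_1=1,U_{n+2}=PU_{n+1}-QU_n$; $[j]_{\boldsymbol U}!:=U_1\cdots U_j$ with $[0]_{\boldsymbol U}!=1$. For $k\le j\le n$, $f(j,k,n):=\sum_{k\le i\le n,\ i\ne j}\min(i,j)$. *)

(* Defs.v *)
From mathcomp Require Import all_boot all_order all_algebra all_field.
Set Implicit Arguments. Unset Strict Implicit. Unset Printing Implicit Defensive.
Import Order.TTheory GRing.Theory Num.Theory.
Local Open Scope ring_scope.

Fixpoint lucasU (P Q : int) (n : nat) : int :=
  match n with
  | 0%N => 0
  | 1%N => 1
  | (m.+1 as n').+1 => P * lucasU P Q n' - Q * lucasU P Q m
  end.

Definition lucasFact (P Q : int) (j : nat) : int :=
  \prod_(1 <= i < j.+1) lucasU P Q i.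

Definition fjkn (j k n : nat) : nat :=
  (\sum_(k <= i < n.+1 | i != j) minn i j)%N.

Definition charpoly2 (P Q : int) : {poly algC} :=
  'X^2 - (P%:~R) *: 'X + (Q%:~R)%:P.

(* Main.v *)
Require Import Defs.
From mathcomp Require Import all_boot all_order all_algebra all_field.
From mathcomp Require Import zify ring lra.
Import Order.TTheory GRing.Theory Num.Theory.
Local Open Scope ring_scope.

Lemma lucasSS P Q n : lucasU P Q n.+2 = P * lucasU P Q n.+1 - Q * lucasU P Q n.
Proof. by []. Qed.

Lemma pow_lucas (R : comNzRingType) (P Q : int) (a : R) :
  a ^+ 2 = P%:~R * a - Q%:~R ->
  forall n, a ^+ n.+1 = (lucasU P Q n.+1)%:~R * a - Q%:~R * (lucasU P Q n)%:~R.
Proof.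
move=> ha n.
suff: a ^+ n.+1 = (lucasU P Q n.+1)%:~R * a - Q%:~R * (lucasU P Q n)%:~R /\
      a ^+ n.+2 = (lucasU P Q n.+2)%:~R * a - Q%:~R * (lucasU P Q n.+1)%:~R by case.
elim: n => [|n [_ IH]].
  split; first by rewrite /= expr1; ring.
  rewrite ha /= ; ring.
split => //.
rewrite exprS IH lucasSS rmorphB /= !rmorphM /=.
rewrite mulrBr mulrA (mulrC a) -mulrA -expr2 ha; ring.
Qed.

Lemma lucas_nz (P Q : int) n :
  P * Q != 0 -> P ^+ 2 - 4 * Q != 0 ->
  (forall alpha beta : algC, alpha != beta ->
     root (charpoly2 P Q) alpha -> root (charpoly2 P Q) beta ->
     ~ (exists m : nat, (0 < m)%N /\ m.-unity_root (alpha / beta))) ->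
  (0 < n)%N -> lucasU P Q n != 0.
Proof.
move=> hPQ hD hroot hn.
have hQ : Q != 0 by move: hPQ; rewrite mulf_eq0 negb_or => /andP[].
set s := sqrtC ((P ^+ 2 - 4 * Q)%:~R : algC).
have hs : s ^+ 2 = P%:~R ^+ 2 - 4 * Q%:~R.
  by rewrite sqrtCK rmorphB rmorphXn /= rmorphM /=.
have hs0 : s != 0.
  apply/negP => /eqP h; move: hs; rewrite h expr0n /= => /eqP.
  rewrite eq_sym -(intrM _ 4) -rmorphXn -rmorphB intr_eq0 /=.
  by rewrite (negbTE hD).
set a := (P%:~R + s) / 2.
set b := (P%:~R - s) / 2.
have hsum : a + b = P%:~R by rewrite /a /b; field.
have hprod : a * b = Q%:~R.
  rewrite /a /b; apply/eqP; rewrite -subr_eq0; apply/eqP.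
  have -> : (P%:~R + s) / 2 * ((P%:~R - s) / 2) - Q%:~R =
            (P%:~R ^+ 2 - 4 * Q%:~R - s ^+ 2) / 4 :> algC by field.
  by rewrite hs subrr mul0r.
have ha : a ^+ 2 = P%:~R * a - Q%:~R by rewrite -hsum -hprod; ring.
have hb : b ^+ 2 = P%:~R * b - Q%:~R by rewrite -hsum -hprod; ring.
have hab : a != b.
  apply/negP => /eqP h; move: hs0; have -> : s = a - b by rewrite /a /b; field.
  by rewrite h subrr eqxx.
clearbody a b.
have hra : root (charpoly2 P Q) a.
  by rewrite /root /charpoly2 !hornerE ha; apply/eqP; ring.
have hrb : root (charpoly2 P Q) b.
  by rewrite /root /charpoly2 !hornerE hb; apply/eqP; ring.
have hb0 : b != 0.
  apply/negP => /eqP h; move: hprod; rewrite h mulr0 => /eqP.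
  by rewrite eq_sym intr_eq0 (negbTE hQ).
apply/negP => /eqP hU.
apply: (hroot a b hab hra hrb); exists n; split => //.
rewrite unity_rootE; case: n hn hU => // m _ hU.
have e : a ^+ m.+1 = b ^+ m.+1.
  by rewrite (@pow_lucas _ P Q a ha m) (@pow_lucas _ P Q b hb m) hU !mul0r.
by rewrite exprMn exprVn e divff // expf_neq0.
Qed.

Lemma split_ne (R : Type) (idx : R) (op : Monoid.com_law idx) (g : nat -> R) k j n :
  (k <= j <= n)%N ->
  \big[op/idx]_(k <= i < n.+1 | i != j) g i =
  op (\big[op/idx]_(k <= i < j) g i) (\big[op/idx]_(j.+1 <= i < n.+1) g i).
Proof.
move=> /andP[hkj hjn].
have h1 : (j <= n.+1)%N by lia.
have h2 : (j < n.+1)%N by lia.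
rewrite (big_cat_nat hkj h1) (big_ltn_cond h2).
rewrite eqxx /=.
congr (op _ _).
  rewrite big_nat_cond [in RHS]big_nat_cond; apply: eq_bigl => i.
  by apply/idP/idP; move=> /andP[/andP[g1 g2] g3]; rewrite g1 g2 /= ?andbT; lia.
rewrite big_nat_cond [in RHS]big_nat_cond; apply: eq_bigl => i.
by apply/idP/idP; move=> /andP[/andP[g1 g2] g3]; rewrite g1 g2 /= ?andbT; lia.
Qed.

Lemma all_split (R : Type) (idx : R) (op : Monoid.law idx) (g : nat -> R) k j n :
  (k <= j <= n)%N ->
  \big[op/idx]_(k <= i < n.+1) g i =
  op (op (\big[op/idx]_(k <= i < j) g i) (g j)) (\big[op/idx]_(j.+1 <= i < n.+1) g i).
Proof.
move=> /andP[hkj hjn].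
have h1 : (j <= n.+1)%N by lia.
have h2 : (j < n.+1)%N by lia.
rewrite (big_cat_nat hkj h1) (big_ltn h2).
by rewrite Monoid.mulmA.
Qed.

Definition Fa (U : nat -> rat) (m : nat) := \prod_(1 <= l < m.+1) U l.

Lemma rev_low (U : nat -> rat) k j : (k <= j)%N ->
  \prod_(k <= i < j) U (j - i)%N = Fa U (j - k).
Proof.
move=> hkj.
rewrite big_nat_rev /=.
rewrite (eq_big_nat _ _ (F2 := fun i => U (i.+1 - k)%N)); last first.
  by move=> i /andP[h1 h2]; congr U; lia.
rewrite -{1}(add0n k) big_addn /Fa big_add1 /=.
by apply: eq_big_nat => i _; congr U; lia.
Qed.

Lemma rev_high (U : nat -> rat) j n : (j <= n)%N ->
  \prod_(j.+1 <= i < n.+1) U (i - j)%N = Fa U (n - j).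
Proof.
move=> hjn.
rewrite -[j.+1]add1n big_addn /Fa.
have -> : (n.+1 - j = (n - j).+1)%N by lia.
by apply: eq_big_nat => i _; congr U; lia.
Qed.

Lemma prod_form (U W : nat -> rat) (c q : rat) (e : nat -> nat) a b z :
  \prod_(a <= i < b) (c * q ^+ e i * U i / (W i * z)) =
  c ^+ (b - a) * \prod_(a <= i < b) q ^+ e i * \prod_(a <= i < b) U i
    / (\prod_(a <= i < b) W i * z ^+ (b - a)).
Proof.
by rewrite prodf_div !big_split /= !prodr_const_nat.
Qed.

Lemma core (U W : nat -> rat) (c q : rat) n k j (t : nat -> rat) :
  (k <= j <= n)%N ->
  (forall i, (k <= i < j)%N -> t i = c * q ^+ i * U (j - i)%N / (W i * W j)) ->
  (forall i, (j < i < n.+1)%N -> t i = - (c * q ^+ j * U (i - j)%N / (W i * W j))) ->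
  \prod_(k <= i < n.+1 | i != j) t i =
  (-1) ^+ (n - j) * c ^+ (n - k) * q ^+ (fjkn j k n) * (Fa U (j - k) * Fa U (n - j))
   / (W j ^+ (n - k) * \prod_(k <= i < n.+1 | i != j) W i).
Proof.
move=> hkjn hlo hhi.
have /andP[hkj hjn] := hkjn.
rewrite !split_ne //= (eq_big_nat _ _ hlo) (eq_big_nat _ _ hhi).
rewrite (prod_form (fun i => U (j - i)%N) W c q (fun i => i)).
under [X in _ * X = _]eq_bigr do rewrite -mulN1r.
rewrite big_split /= prodr_const_nat.
rewrite (prod_form (fun i => U (i - j)%N) W c q (fun _ => j)).
rewrite rev_low // rev_high // prodr_const_nat.
have hf : fjkn j k n = (\sum_(k <= i < j) i + (n.+1 - j.+1) * j)%N.
  rewrite /fjkn split_ne //= -sum_nat_const_nat; congr addn.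
    by apply: eq_big_nat => i hi; lia.
  by apply: eq_big_nat => i hi; lia.
rewrite hf exprD -prodrXr mulnC exprM.
have -> : (n - k = (j - k) + (n.+1 - j.+1))%N by lia.
rewrite !exprD.
rewrite !invfM.
ring.
Qed.

Lemma doc_int (P Q : int) b m :
  lucasU P Q (b + m) * lucasU P Q b.+1 - lucasU P Q (b + m).+1 * lucasU P Q b
  = Q ^+ b * lucasU P Q m.
Proof.
elim: b => [|b IH]; first by rewrite /= add0n expr0; ring.
rewrite addSn !lucasSS exprS -mulrA -IH; ring.
Qed.

Lemma lo_term (U : nat -> rat) (q : rat) i j :
  (forall b m, U (b + m)%N * U b.+1 - U (b + m).+1 * U b = q ^+ b * U m) ->
  (0 < i)%N -> (i < j)%N -> U i != 0 -> U j != 0 ->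
  U j.-1 * U i - U i.-1 * U j = q ^+ i.-1 * U (j - i)%N.
Proof.
move=> hd hi hij _ _.
have := hd i.-1 (j - i)%N.
have -> : (i.-1 + (j - i) = j.-1)%N by lia.
have hj : (0 < j)%N by lia.
rewrite (prednK hi) (prednK hj) => <-; ring.
Qed.

Lemma hi_term (U : nat -> rat) (q : rat) i j :
  (forall b m, U (b + m)%N * U b.+1 - U (b + m).+1 * U b = q ^+ b * U m) ->
  (0 < j)%N -> (j < i)%N ->
  U j.-1 * U i - U i.-1 * U j = - (q ^+ j.-1 * U (i - j)%N).
Proof.
move=> hd hj hij.
have := hd j.-1 (i - j)%N.
have -> : (j.-1 + (i - j) = i.-1)%N by lia.
have hi : (0 < i)%N by lia.
rewrite (prednK hi) (prednK hj).
move=> <-; ring.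
Qed.

Theorem lemma4 (P Q R0 R1 : int) (n k j : nat) :
  P * Q != 0 ->
  P ^+ 2 - 4 * Q != 0 ->
  0 < `|R0| + `|R1| ->
  gcdz P Q = 1%N ->
  gcdz R1 Q = 1%N ->
  (forall alpha beta : algC, alpha != beta ->
     root (charpoly2 P Q) alpha -> root (charpoly2 P Q) beta ->
     ~ (exists m : nat, (0 < m)%N /\ m.-unity_root (alpha / beta))) ->
  (0 < k)%N -> (k <= n)%N -> (k <= j <= n)%N ->
  let U (i : nat) : rat := (lucasU P Q i)%:~R in
  let F (i : nat) : rat := (lucasFact P Q i)%:~R in
  let r0 : rat := R0%:~R in
  let r1 : rat := R1%:~R in
  let q : rat := Q%:~R in
  (\prod_(k <= i < n.+1 | i != j) (r0 * q * (U j.-1 / U j - U i.-1 / U i))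
    = (-1) ^+ (n - j) * r0 ^+ (n - k) * q ^+ (fjkn j k n)
      * (F (j - k)%N * F (n - j)%N)
      / (U j ^ ((n - k)%:Z - 1) * \prod_(k <= i < n.+1) U i))
  /\
  ((2 <= k)%N ->
   \prod_(k <= i < n.+1 | i != j) (r1 * (U i / U i.-1 - U j / U j.-1))
    = (-1) ^+ (n - j) * r1 ^+ (n - k) * q ^ ((fjkn j k n)%:Z - (n - k)%:Z)
      * (F (j - k)%N * F (n - j)%N)
      / (U j.-1 ^ ((n - k)%:Z - 1) * \prod_(k.-1 <= i < n) U i)).
Proof.
move=> hPQ hD _ _ _ hroot hk hkn hkjn U F r0 r1 q.
have /andP[hkj hjn] := hkjn.
have hU : forall i, (0 < i)%N -> U i != 0.
  by move=> i hi; rewrite /U intr_eq0; exact: lucas_nz.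
have hq : q != 0.
  by rewrite /q intr_eq0; move: hPQ; rewrite mulf_eq0 negb_or => /andP[].
have hd : forall b m, U (b + m)%N * U b.+1 - U (b + m).+1 * U b = q ^+ b * U m.
  move=> b m; have := congr1 (fun x : int => (x%:~R : rat)) (doc_int P Q b m).
  by rewrite /= rmorphB /= !rmorphM /= rmorphXn.
have hF : forall m, F m = Fa U m.
  by move=> m; rewrite /F /lucasFact rmorph_prod.
rewrite !hF.
split.
  have C := @core U U r0 q n k j
     (fun i => r0 * q * (U j.-1 / U j - U i.-1 / U i)) hkjn.
  rewrite C; first last.
  - move=> i /andP[hji hin] /=.
    have hUi : U i != 0 by apply: hU; lia.
    have hUj : U j != 0 by apply: hU; lia.
    have hN := @hi_term U q i j hd ltac:(lia) hji.
    have e : q ^+ j = q * q ^+ j.-1 by rewrite -exprS prednK //; lia.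
    rewrite e; apply/eqP; rewrite -subr_eq0; apply/eqP.
    have -> : r0 * q * (U j.-1 / U j - U i.-1 / U i) -
      - (r0 * (q * q ^+ j.-1) * U (i - j)%N / (U i * U j)) =
      r0 * q * ((U j.-1 * U i - U i.-1 * U j) + q ^+ j.-1 * U (i - j)%N) / (U i * U j)
      by field; apply/andP.
    by rewrite hN addNr mulr0 mul0r.
  - move=> i /andP[hki hij] /=.
    have hUi : U i != 0 by apply: hU; lia.
    have hUj : U j != 0 by apply: hU; lia.
    have hN := @lo_term U q i j hd ltac:(lia) hij hUi hUj.
    have e : q ^+ i = q * q ^+ i.-1 by rewrite -exprS prednK //; lia.
    rewrite e.
    have -> : r0 * (q * q ^+ i.-1) * U (j - i)%N / (U i * U j) =
      r0 * q * (q ^+ i.-1 * U (j - i)%N) / (U i * U j) by ring.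
    rewrite -hN; field; apply/andP; split => //.
  rewrite (all_split _ _ _ _ _ _ _ hkjn) (split_ne _ _ _ _ _ _ _ hkjn) /=.
  have hUj : U j != 0 by apply: hU; lia.
  rewrite expfzDr // exprN1 -exprnP.
  congr (_ / _).
  rewrite [RHS](_ : _ = U j ^+ (n - k) * (\prod_(k <= i < j) U i *
     \prod_(j.+1 <= i < n.+1) U i) * (U j * (U j)^-1)); last by ring.
  by rewrite divff // mulr1.
move=> hk2.
have C := @core U (fun i => U i.-1) (r1 / q) q n k j
   (fun i => r1 * (U i / U i.-1 - U j / U j.-1)) hkjn.
rewrite C; first last.
- move=> i /andP[hji hin] /=.
  have hUi : U i.-1 != 0 by apply: hU; lia.
  have hUj : U j.-1 != 0 by apply: hU; lia.
  have hN := @hi_term U q i j hd ltac:(lia) hji.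
  have e : q ^+ j = q * q ^+ j.-1 by rewrite -exprS prednK //; lia.
  rewrite e; apply/eqP; rewrite -subr_eq0; apply/eqP.
  have -> : r1 * (U i / U i.-1 - U j / U j.-1) -
    - (r1 / q * (q * q ^+ j.-1) * U (i - j)%N / (U i.-1 * U j.-1)) =
    r1 * ((U j.-1 * U i - U i.-1 * U j) + q ^+ j.-1 * U (i - j)%N) / (U i.-1 * U j.-1)
    by field; apply/and3P.
  by rewrite hN addNr mulr0 mul0r.
- move=> i /andP[hki hij] /=.
  have hUi : U i != 0 by apply: hU; lia.
  have hUj : U j != 0 by apply: hU; lia.
  have hUi' : U i.-1 != 0 by apply: hU; lia.
  have hUj' : U j.-1 != 0 by apply: hU; lia.
  have hN := @lo_term U q i j hd ltac:(lia) hij hUi hUj.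
  have e : q ^+ i = q * q ^+ i.-1 by rewrite -exprS prednK //; lia.
  rewrite e.
  have -> : r1 / q * (q * q ^+ i.-1) * U (j - i)%N / (U i.-1 * U j.-1) =
     r1 * (q ^+ i.-1 * U (j - i)%N) / (U i.-1 * U j.-1) by field; apply/and3P.
  rewrite -hN; field; apply/andP; split => //.
have hsh : \prod_(k.-1 <= i < n) U i = \prod_(k <= i < n.+1) U i.-1.
  by rewrite -{2}(prednK hk) big_add1 /=.
rewrite hsh (all_split _ _ _ _ _ _ _ hkjn) (split_ne _ _ _ _ _ _ _ hkjn) /=.
have hUj : U j.-1 != 0 by apply: hU; lia.
rewrite (expfzDr _ _ hUj) exprN1 -exprnP.
rewrite (expfzDr _ _ hq) -exprnN -exprnP expr_div_n.
set L := \prod_(k <= i < j) U i.-1.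
set H := \prod_(j.+1 <= i < n.+1) U i.-1.
set A := Fa U (j - k) * Fa U (n - j).
rewrite [U j.-1 ^+ (n - k) * (U j.-1)^-1 * (L * U j.-1 * H)](_ : _ =
   U j.-1 ^+ (n - k) * (L * H) * (U j.-1 * (U j.-1)^-1)); last by ring.
rewrite divff // mulr1.
ring.
Qed.
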